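(* Let $G$ be an ordered graph and let $H$ be a spanning subgraph of $G$ (with the orders inherited from $G$). Then for every edge $e\in E(H)$ we have $\mathrm{ht}_H(e)\preceq_{\mathrm{lex}}\mathrm{ht}_G(e)$.
   Context: An ordered graph is a finite simple graph $G$ equipped with a total order $\le_G$ on $E(G)$ and a total order $\le^V_G$ on $V(G)$. Let $\mathbb N=\{1,2,\dots\}$. Define $\preceq_{\mathrm{lex}}$ on $\mathbb N\times V(G)$ by $(i,v)\preceq_{\mathrm{lex}}(i',v')$ iff $i<i'$, or $i=i'$ and $v\le^V_G v'$. The height table $\mathrm{HT}(G)$ is a partially filled array indexed by $\mathbb N\times V(G)$, built by going through all $(i,v)$ in $\preceq_{\mathrm{lex}}$-increasing order and setting the entry at $(i,v)$ to be the $\le_G$-largest edge containing $v$ not yet entered into the table (blank if none remain). Every edge is entered exactly once; $\mathrm{ht}_G(e)$ denotes the position (row, column) of $e$ in $\mathrm{HT}(G)$. *)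

(* Defs.v *)
From mathcomp Require Import all_boot.
Set Implicit Arguments. Unset Strict Implicit. Unset Printing Implicit Defensive.

(* An ordered graph on a finite vertex type V:
   - E : {set {set V}} the edge set, each edge a 2-element subset of V;
   - vr : V -> nat an injective rank function encoding the total vertex order
     (u <=^V v  iff  vr u <= vr v);
   - er : {set V} -> nat injective on E, encoding the total edge order
     (e <= f iff er e <= er f).  A subgraph inherits both orders by using the
     same vr and er. *)

Section HeightTable.
Variable V : finType.
Variable vr : V -> nat.
Variable er : {set V} -> nat.

Definition simple_graph (E : {set {set V}}) : Prop :=
  forall e, e \in E -> #|e| = 2.

Definition vlist : seq V := sort (fun u v => vr u <= vr v) (enum V).

Definition largest_edge (R : {set {set V}}) (v : V) : option {set V} :=
  [pick e in R | (v \in e) && [forall f in R, (v \in f) ==> (er f <= er e)]].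

(* process row i, going through vertices vs in order; returns remaining edges
   and the list of entries (edge, (row, column)) created *)
Fixpoint fill_row (R : {set {set V}}) (i : nat) (vs : seq V)
  : {set {set V}} * seq ({set V} * (nat * V)) :=
  match vs with
  | [::] => (R, [::])
  | v :: vs' =>
      match largest_edge R v with
      | Some e =>
          let: (R', l) := fill_row (R :\ e) i vs' in (R', (e, (i, v)) :: l)
      | None => fill_row R i vs'
      end
  end.

Fixpoint fill_rows (k : nat) (i : nat) (R : {set {set V}})
  : seq ({set V} * (nat * V)) :=
  match k with
  | 0 => [::]
  | k'.+1 => let: (R', l) := fill_row R i vlist in l ++ fill_rows k' i.+1 R'
  end.

(* Rows are numbered from 1; #|E|.+1 rows suffice, since
   every row containing no entry has an empty remaining edge set. *)
Definition height_table (E : {set {set V}}) : seq ({set V} * (nat * V)) :=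
  fill_rows #|E|.+1 1 E.

Definition ht (E : {set {set V}}) (e : {set V}) : option (nat * V) :=
  omap snd (ohead [seq p <- height_table E | p.1 == e]).

Definition lex_le (p q : nat * V) : bool :=
  (p.1 < q.1) || ((p.1 == q.1) && (vr p.2 <= vr q.2)).

End HeightTable.

(* Main.v *)
Require Import Defs.
From mathcomp Require Import all_boot.
Set Implicit Arguments. Unset Strict Implicit. Unset Printing Implicit Defensive.

Section Aux.
Variable V : finType.
Variable vr : V -> nat.
Variable er : {set V} -> nat.

Notation LE := (largest_edge er).

Definition step (R : {set {set V}}) (p : nat * V) :=
  match LE R p.2 with
  | Some e => (R :\ e, [:: (e, p)])
  | None => (R, [::])
  end.

Fixpoint run R (ps : seq (nat * V)) : {set {set V}} * seq ({set V} * (nat * V)) :=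
  match ps with
  | [::] => (R, [::])
  | p :: ps' => let s := step R p in let r := run s.1 ps' in (r.1, s.2 ++ r.2)
  end.

Fixpoint positions k i : seq (nat * V) :=
  match k with 0 => [::] | k'.+1 => [seq (i, v) | v <- vlist vr] ++ positions k' i.+1 end.

Lemma run_cat R ps qs :
  run R (ps ++ qs) = ((run (run R ps).1 qs).1, (run R ps).2 ++ (run (run R ps).1 qs).2).
Proof.
elim: ps R => [|p ps IH] R //=; first by case: (run R qs).
by rewrite IH /= catA.
Qed.

Lemma fill_row_run R i vs : fill_row er R i vs = run R [seq (i, v) | v <- vs].
Proof.
elim: vs R => [|v vs IH] R //=.
rewrite /step /=; case: (LE R v) => [e|] /=; rewrite IH //.
by case: (run _ _).
by case: (run _ _).
Qed.

Lemma fill_rows_run k i R : fill_rows vr er k i R = (run R (positions k i)).2.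
Proof.
elim: k i R => [|k IH] i R //=.
rewrite fill_row_run run_cat /=.
by case E: (run R _) => [R' l] /=; rewrite IH.
Qed.

Lemma positions_add k m i : positions (k + m) i = positions k i ++ positions m (i + k).
Proof.
elim: k i => [|k IH] i /=; first by rewrite addn0.
by rewrite IH catA addSnnS.
Qed.

Definition first_pos (e : {set V}) (l : seq ({set V} * (nat * V))) :=
  omap snd (ohead [seq p <- l | p.1 == e]).

Lemma first_pos_cat e l l' p : first_pos e l = Some p -> first_pos e (l ++ l') = Some p.
Proof.
rewrite /first_pos filter_cat; case: [seq _ <- l | _] => //.
Qed.

Lemma first_pos_Some e l : e \in map fst l -> exists p, first_pos e l = Some p.
Proof.
elim: l => [|[f q] l IH] //=; rewrite in_cons /first_pos /=.
case: eqP => [->|ne] /=; first by rewrite eqxx; exists q.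
case: eqP => [E|_]; first by case: ne.
exact: IH.
Qed.

Lemma first_pos_mem e l p : first_pos e l = Some p -> p \in map snd l.
Proof.
elim: l => [|[f q] l IH] //=; rewrite /first_pos /=.
case: (f == e) => /= [[->]|H]; first by rewrite in_cons eqxx.
by rewrite in_cons (IH H) orbT.
Qed.

Lemma run_snd R ps : {subset map snd (run R ps).2 <= ps}.
Proof.
elim: ps R => [|p ps IH] R //= x.
rewrite map_cat mem_cat in_cons /step; case: (LE R p.2) => [g|] /=.
  by rewrite in_cons in_nil orbF => /orP[->|/IH ->] //; rewrite orbT.
by move/IH=> ->; rewrite orbT.
Qed.

Lemma LE_Some R v g : LE R v = Some g ->
  [/\ g \in R, v \in g & forall f, f \in R -> v \in f -> er f <= er g].
Proof.
rewrite /largest_edge; case: pickP => // x /andP[xR /andP[vx /forall_inP H]] [<-].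
by split=> // f fR vf; exact: (implyP (H f fR) vf).
Qed.

Lemma LE_None R v f : LE R v = None -> f \in R -> v \in f -> False.
Proof.
move=> HN fR vf; move: HN; rewrite /largest_edge; case: pickP => // H _.
case: (@arg_maxnP _ f (fun g => (g \in R) && (v \in g)) er); first by rewrite fR vf.
move=> g /andP[gR vg] Hmax.
have Hf : [forall f0 in R, (v \in f0) ==> (er f0 <= er g)].
  by apply/forall_inP => f0 f0R; apply/implyP => vf0; exact: (Hmax f0 (introT andP (conj f0R vf0))).
by move: (H g); rewrite gR vg Hf.
Qed.


Lemma run_sub (R : {set {set V}}) ps : (run R ps).1 \subset R.
Proof.
elim: ps R => [|p ps IH] R /=; first exact: subxx.
apply: (subset_trans (IH _)); rewrite /step; case: (LE R p.2) => [g|] //=.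
exact: subD1set.
Qed.

Lemma run_removed ps (R : {set {set V}}) e : e \in R -> e \notin (run R ps).1 -> e \in map fst (run R ps).2.
Proof.
elim: ps R => [|p ps IH] R //=; first by move=> ->.
move=> eR; rewrite map_cat mem_cat /step; case E: (LE R p.2) => [g|] /=; last first.
  by move/(IH _ eR) ->.
rewrite in_cons; case: (eqVneq e g) => [->|ne] //= H.
by rewrite (IH _ _ H) //= in_setD1 ne eR.
Qed.

Lemma run_card ps (R : {set {set V}}) e (v : V) j : e \in R -> v \in e -> (j, v) \in ps -> #|(run R ps).1| < #|R|.
Proof.
elim: ps R => [|p ps IH] R //= eR ve.
rewrite in_cons /step; case E: (LE R p.2) => [g|] /= H.
  have [gR _ _] := LE_Some E.
  apply: (leq_ltn_trans (subset_leq_card (run_sub _ _))).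
  by rewrite (cardsD1 g R) gR.
case/orP: H => [/eqP Hp|]; last exact: IH.
by subst p; case: (LE_None E eR ve).
Qed.

Variable EG : {set {set V}}.
Hypothesis erI : {in EG &, injective er}.
Hypothesis simpleG : simple_graph EG.

Lemma LE_sub (RH RG : {set {set V}}) v g : RH \subset RG -> RG \subset EG ->
  LE RG v = Some g -> g \in RH -> LE RH v = Some g.
Proof.
move=> sHG sGE EGs gH; have [gG vg Mg] := LE_Some EGs.
case EH: (LE RH v) => [h|]; last by case: (LE_None EH gH vg).
have [hH vh Mh] := LE_Some EH.
have hG : h \in RG := subsetP sHG _ hH.
congr Some; apply: erI; try exact: (subsetP sGE).
by apply/eqP; rewrite eqn_leq (Mg _ hG vh) (Mh _ gH vg).
Qed.

Lemma main ps : pairwise (lex_le vr) ps -> forall (RH RG : {set {set V}}) e pG,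
  RH \subset RG -> RG \subset EG -> e \in RH ->
  first_pos e (run RG ps).2 = Some pG ->
  exists pH, first_pos e (run (RH : {set {set V}}) ps).2 = Some pH /\ lex_le vr pH pG.
Proof.
elim: ps => [|p ps IH] //= /andP[/allP Hp Hps] RH RG e pG sHG sGE eH.
rewrite /step; case EG1: (LE RG p.2) => [g|] /=.
  case: (boolP (g \in RH)) => gH.
    rewrite (LE_sub sHG sGE EG1 gH) /=.
    rewrite /first_pos /=; case: (eqVneq g e) => [<-|ne] /=.
      by move=> [<-]; exists p; split => //; rewrite /lex_le eqxx leqnn orbT.
    move=> H; apply: (IH Hps _ _ _ _ _ _ _ H).
    - by apply: setSD.
    - exact: subset_trans (subD1set _ _) sGE.
    - by rewrite in_setD1 eq_sym ne.
  have ge : g != e by apply: contraNneq gH => ->.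
  rewrite {1}/first_pos /= (negbTE ge) => H.
  have pGin : pG \in ps by move: (first_pos_mem H); apply: run_snd.
  have sHG' : RH \subset RG :\ g.
    by apply/subsetP => x xH; rewrite in_setD1 (subsetP sHG _ xH) andbT; apply: contraNneq gH => <-.
  have sGE' : RG :\ g \subset EG := subset_trans (subD1set _ _) sGE.
  case EH1: (LE RH p.2) => [h|] /=.
    rewrite /first_pos /=; case: (eqVneq h e) => [<-|ne] /=.
      by exists p; split => //; apply: Hp.
    apply: (IH Hps _ _ _ _ _ _ _ H) => //.
      exact: subset_trans (subD1set _ _) sHG'.
    by rewrite in_setD1 eq_sym ne.
  exact: (IH Hps _ _ _ _ sHG' sGE' eH H).
move=> H.
case EH1: (LE RH p.2) => [h|] /=; last exact: (IH Hps _ _ _ _ sHG sGE eH H).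
have pGin : pG \in ps by move: (first_pos_mem H); apply: (@run_snd _ ps).
rewrite /first_pos /=; case: (eqVneq h e) => [<-|ne] /=.
  by exists p; split => //; apply: Hp.
apply: (IH Hps _ _ _ _ _ sGE _ H).
  exact: subset_trans (subD1set _ _) sHG.
by rewrite in_setD1 eq_sym ne.
Qed.


Lemma complete k i (R : {set {set V}}) : R \subset EG -> #|R| < k ->
  forall e, e \in R -> e \in map fst (run R (positions k i)).2.
Proof.
elim: k i R => [|k IH] i R // sRE Hk e eR.
rewrite /= run_cat /= map_cat mem_cat.
case: (boolP (e \in (run R [seq (i, v) | v <- vlist vr]).1)) => eR1; last first.
  by rewrite (run_removed eR eR1).
apply/orP; right; apply: IH => //; first exact: subset_trans (run_sub _ _) sRE.
have := simpleG (subsetP sRE e eR) => ce.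
have : 0 < #|e| by rewrite ce.
rewrite card_gt0 => /set0Pn [v ve].
have vin : (i, v) \in [seq (i, v) | v <- vlist vr].
  by apply: map_f; rewrite /vlist mem_sort mem_enum.
exact: leq_trans (run_card eR ve vin) _.
Qed.


End Aux.


Lemma pos_ge (V : finType) (vr : V -> nat) k i : all (fun p => i <= p.1) (positions vr k i).
Proof.
elim: k i => [|k IH] i //=; rewrite all_cat; apply/andP; split.
  by rewrite all_map; apply/allP => v _ /=.
by apply/allP => p /(allP (IH i.+1)) /=; apply: ltnW.
Qed.

Lemma pos_pairwise (V : finType) (vr : V -> nat) k i : pairwise (lex_le vr) (positions vr k i).
Proof.
elim: k i => [|k IH] i //=; rewrite pairwise_cat IH andbT; apply/andP; split.
  apply/allrelP => p q /mapP [v _ ->] qin.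
  by have := allP (pos_ge vr k i.+1) q qin; rewrite /lex_le /= => ->.
rewrite pairwise_map.
have : pairwise (fun u v => vr u <= vr v) (vlist vr).
  rewrite -sorted_pairwise; last by move=> y x z; apply: leq_trans.
  by apply: sort_sorted => x y; apply: leq_total.
apply: sub_pairwise => u v /= H; by rewrite /lex_le /= eqxx H orbT.
Qed.

Theorem lemma3p8 (V : finType) (vr : V -> nat) (er : {set V} -> nat)
  (EG EH : {set {set V}}) :
  injective vr ->
  {in EG &, injective er} ->
  simple_graph EG ->
  EH \subset EG ->
  forall e, e \in EH ->
    exists pH pG, [/\ ht vr er EH e = Some pH, ht vr er EG e = Some pG
                    & lex_le vr pH pG].
Proof.
move=> vrI erI sG sHG e eH.
have eG := subsetP sHG e eH.
have htE E : ht vr er E e = first_pos e (height_table vr er E) by [].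
have hH := complete vr er sG 1 sHG (ltnSn _) eH.
have hG := complete vr er sG 1 (subxx EG) (ltnSn _) eG.
have [pH0 HpH0] := first_pos_Some hH.
have [pG HpG] := first_pos_Some hG.
exists pH0, pG; rewrite !htE /height_table !fill_rows_run HpH0 HpG; split => //.
have le : #|EH|.+1 <= #|EG|.+1 by rewrite ltnS subset_leq_card.
have [pH [HpH lexH]] := main erI (pos_pairwise vr #|EG|.+1 1) sHG (subxx EG) eH HpG.
move: HpH; rewrite -(subnKC le) positions_add run_cat /=.
by rewrite (first_pos_cat _ HpH0) => -[->].
Qed.
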